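(* Let $G$ be a graph on $n\ge 3$ vertices with no isolated vertices, and let $r$ be a positive integer. If $\mathscr{Z}^{\rm TAR}(G)\cong K_{1,r}\,\square\,K_2$, then $G\cong K_{1,r}$.
   Context: Zero forcing: starting with a set $S$ of blue vertices, a blue vertex $v$ may turn blue a white vertex $w$ if $w$ is the only white neighbor of $v$; $S$ is a zero forcing set if repeated application colors all vertices blue. $\mathscr{Z}^{\rm TAR}(G)$ has vertices the zero forcing sets of $G$, two adjacent iff their symmetric difference has size 1. $K_{1,r}$ is the star with $r$ leaves and $\square$ is the Cartesian product of graphs. *)

(* Defs.v *)
From mathcomp Require Import all_boot.
Set Implicit Arguments. Unset Strict Implicit. Unset Printing Implicit Defensive.

Definition simple_graph (T : finType) (e : rel T) : Prop :=
  symmetric e /\ irreflexive e.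

Inductive forces_all (T : finType) (e : rel T) : {set T} -> Prop :=
| fa_done (B : {set T}) : B = [set: T] -> forces_all e B
| fa_step (B : {set T}) (v w : T) :
    v \in B -> w \notin B -> e v w ->
    (forall u, e v u -> u != w -> u \in B) ->
    forces_all e (w |: B) -> forces_all e B.

Definition zero_forcing_set (T : finType) (e : rel T) (S : {set T}) : Prop :=
  forces_all e S.

Definition tar_adj (T : finType) (S S' : {set T}) : bool :=
  #|(S :\: S') :|: (S' :\: S)| == 1.

(* The star K_{1,r}: centre None, leaves Some i. *)
Definition star_adj (r : nat) (x y : option 'I_r) : bool :=
  match x, y with
  | None, Some _ | Some _, None => true
  | _, _ => false
  end.

Definition starK2_adj (r : nat) (x y : option 'I_r * bool) : bool :=
  ((x.1 == y.1) && (x.2 != y.2)) || ((x.2 == y.2) && star_adj x.1 y.1).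

Definition iso_onto (U V : Type) (A : U -> Prop) (eU : U -> U -> bool)
  (eV : V -> V -> bool) : Prop :=
  exists f : V -> U,
    [/\ injective f, (forall x, A (f x)), (forall S, A S -> exists x, f x = S)
      & forall x y, eU (f x) (f y) = eV x y].

Definition graph_iso (T V : finType) (eT : rel T) (eV : rel V) : Prop :=
  exists f : T -> V, bijective f /\ forall x y, eV (f x) (f y) = eT x y.

(* Main.v *)
Require Import Defs.
From mathcomp Require Import all_boot.
Set Implicit Arguments. Unset Strict Implicit. Unset Printing Implicit Defensive.

Lemma tar_adjP (T : finType) (A S : {set T}) :
  tar_adj A S -> exists x, forall y, (y \in S) = (y \in A) (+) (y == x).
Proof.
rewrite /tar_adj => /cards1P [x Hx]; exists x => y.
move/setP: Hx => /(_ y); rewrite !inE.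
by case: (y \in A); case: (y \in S); case: (y == x).
Qed.

Lemma tar_adj_of (T : finType) (A S : {set T}) x :
  (forall y, (y \in S) = (y \in A) (+) (y == x)) -> tar_adj A S.
Proof.
move=> H; rewrite /tar_adj.
have -> : (A :\: S) :|: (S :\: A) = [set x].
  apply/setP => y; rewrite !inE H.
  by case: (y \in A); case: (y == x).
by rewrite cards1.
Qed.

Lemma inv_fa (T : finType) (e : rel T) B : forces_all e B -> B != setT ->
  exists v w, [/\ v \in B, w \notin B, e v w & forall z, e v z -> z != w -> z \in B].
Proof.
destruct 1 as [B HB|B v w vB wB evw H _]; first by rewrite HB eqxx.
by move=> _; exists v, w.
Qed.

Theorem proposition2p35 (T : finType) (e : rel T) (r : nat) :
  simple_graph e ->
  3 <= #|T| ->
  (forall v : T, exists u, e v u) ->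
  0 < r ->
  iso_onto (zero_forcing_set e) (@tar_adj T) (@starK2_adj r) ->
  graph_iso e (@star_adj r).
Proof.
move=> [esym eirr] n3 noiso r0 [f [finj fZ fsurj fadj]].
have ZF1 : forall v, zero_forcing_set e ([set: T] :\ v).
  move=> v; have [u evu] := noiso v.
  have uv : u != v by apply/eqP => uv; move: evu; rewrite uv eirr.
  apply: (@fa_step _ _ _ u v).
  - by rewrite !inE uv.
  - by rewrite !inE eqxx.
  - by rewrite esym.
  - by move=> z _ zv; rewrite !inE zv.
  apply: fa_done; apply/setP => z; rewrite !inE; by case: (z == v).
have ZF2 : forall u w v, u != w -> v != u -> v != w -> e v u -> ~~ e v w ->
    zero_forcing_set e ([set: T] :\ u :\ w).
  move=> u w v uw vu vw evu evw.
  apply: (@fa_step _ _ _ v u).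
  - by rewrite !inE vu vw.
  - by rewrite !inE eqxx andbF.
  - by [].
  - move=> z evz zu; rewrite !inE zu !andbT; apply/eqP => zw; move: evz evw.
    by rewrite zw => ->.
  have -> : u |: ([set: T] :\ u :\ w) = [set: T] :\ w.
    apply/setP => z; rewrite !inE; case: (eqVneq z u) => [->|] /=.
      by rewrite uw.
    by rewrite andbT.
  exact: ZF1.
have setT_ZF : zero_forcing_set e [set: T] by apply: fa_done.
have [c fc] := fsurj _ setT_ZF.
have eqD1 : forall u w, [set: T] :\ u = [set: T] :\ w -> u = w.
  move=> u w /setP /(_ u); rewrite !inE eqxx /=.
  by case: eqP.
pose y v := odflt c [pick z | f z == [set: T] :\ v].
have yP : forall v, f (y v) = [set: T] :\ v.
  move=> v; rewrite /y; case: pickP => [z /eqP //|H].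
  have [z fz] := fsurj _ (ZF1 v); by move: (H z); rewrite fz eqxx.
have adjT : forall v, tar_adj [set: T] ([set: T] :\ v).
  move=> v; apply: (@tar_adj_of _ _ _ v) => z; rewrite !inE; by case: (z == v).
have cy : forall v, starK2_adj c (y v) by move=> v; rewrite -fadj fc yP.
have yinj : injective y by move=> u w H; apply: eqD1; rewrite -!yP H.
clearbody y.
have [b cE] : exists b, c = (None, b).
  case: c fc cy => [[i|] bc] fc cy; last by exists bc.
  exfalso.
  have : #|T| <= 2.
    rewrite -cardsT -(card_imset _ yinj).
    apply: leq_trans (subset_leq_card (_ : _ \subset [set (None, bc); (Some i, ~~ bc)])) _.
      apply/subsetP => _ /imsetP [v _ ->]; move: (cy v); clear fc cy; rewrite !inE.
      case: (y v) => [[j|] bb]; rewrite /starK2_adj /=.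
        by case: eqP => [->|] //=; case: bb; case: bc.
      by case: bb; case: bc.
    by rewrite cards2; case: eqP.
  by rewrite leqNgt n3.
rewrite cE in fc cy.

have [v0 fv0] : exists v0, f (None, ~~ b) = [set: T] :\ v0.
  have : tar_adj [set: T] (f (None, ~~ b)).
    by rewrite -fc fadj /starK2_adj /=; case: (b).
  move/tar_adjP => [x Hx]; exists x; apply/setP => z; rewrite Hx !inE.
  by case: (z == x).
have yv0 : y v0 = (None, ~~ b) by apply: finj; rewrite yP fv0.
have yS : forall u, u != v0 -> exists i, y u = (Some i, b).
  move=> u uv0; move: (cy u); case E: (y u) => [[i|] bb]; rewrite /starK2_adj /= ?andbT ?andbF ?orbF.
    by move=> /eqP ->; exists i.
  move=> /eqP bb'.
  have : y u = y v0 by rewrite yv0 E; congr pair; move: bb'; case: (b); case: (bb).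
  by move/yinj => uv; move: uv0; rewrite uv eqxx.
have ZFA : forall u, u != v0 -> zero_forcing_set e ([set: T] :\ u :\ v0).
  move=> u uv0; have [i yi] := yS u uv0.
  have h1 : tar_adj ([set: T] :\ u) (f (Some i, ~~ b)).
    by rewrite -(yP u) yi fadj /starK2_adj /= eqxx; case: (b).
  have h2 : tar_adj ([set: T] :\ v0) (f (Some i, ~~ b)).
    by rewrite -fv0 fadj /starK2_adj /= eqxx.
  have h3 : f (Some i, ~~ b) != [set: T].
    by rewrite -fc; apply/eqP => /finj.
  suff -> : [set: T] :\ u :\ v0 = f (Some i, ~~ b) by apply: fZ.
  move: h1 h2 => /tar_adjP [x Hx] /tar_adjP [x' Hx'].
  have xu : x != u.
    apply/eqP => xu; move/eqP: h3; apply; apply/setP => z; rewrite Hx !inE xu.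
    by case: (z == u).
  have x'v0 : x' != v0.
    apply/eqP => xv; move/eqP: h3; apply; apply/setP => z; rewrite Hx' !inE xv.
    by case: (z == v0).
  have xv0 : x = v0.
    have := Hx v0; rewrite Hx' !inE eqxx /= eq_sym (negbTE x'v0) eq_sym uv0 /=.
    by case: eqP.
  apply/setP => z; rewrite Hx !inE xv0.
  case: (eqVneq z u) => [->|_]; first by move: uv0; case: (u == v0).
  by case: (z == v0).
have NZB : forall u w, u != v0 -> w != v0 -> u != w ->
    ~ zero_forcing_set e ([set: T] :\ u :\ w).
  move=> u w uv0 wv0 uw /fsurj [z fz].
  have [i yi] := yS u uv0; have [j yj] := yS w wv0.
  have ij : i != j.
    apply/eqP => ij; move: uw; rewrite -ij in yj.
    by rewrite -yj in yi; rewrite (yinj _ _ yi) eqxx.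
  have a1 : starK2_adj (Some i, b) z.
    rewrite -fadj -yi yP fz; apply: (@tar_adj_of _ _ _ w) => x; rewrite !inE.
    case: (eqVneq x w) => [->|xw]; rewrite /= ?andbT ?andbF.
      by rewrite ?uw // eq_sym uw.
    by rewrite addbF.
  have a2 : starK2_adj (Some j, b) z.
    rewrite -fadj -yj yP fz; apply: (@tar_adj_of _ _ _ u) => x; rewrite !inE.
    case: (eqVneq x u) => [->|xu]; rewrite /= ?andbT ?andbF.
      by rewrite ?uw // eq_sym uw.
    by rewrite addbF.
  have zc : z != (None, b).
    apply/eqP => zE; move: fz; rewrite zE fc => /setP /(_ u).
    by rewrite !inE eqxx andbF.
  move: a1 a2 zc; case: z {fz} => [[k|] bb]; rewrite /starK2_adj /= ?andbF ?orbF.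
    move=> /andP [/eqP [ik] _] /andP [/eqP [jk] _] _.
    by move: ij; rewrite ik jk eqxx.
  by rewrite andbT => /eqP <- _; rewrite eqxx.
have twin : forall u w v, u != v0 -> w != v0 -> u != w -> v != u -> v != w ->
    e v u = e v w.
  move=> u w v uv0 wv0 uw vu vw.
  case Eu: (e v u); case Ew: (e v w) => //; exfalso.
    apply: (NZB u w uv0 wv0 uw); apply: (ZF2 u w v uw vu vw Eu); by rewrite Ew.
  have wu : w != u by rewrite eq_sym.
  apply: (NZB w u wv0 uv0 wu); apply: (ZF2 w u v wu vw vu Ew); by rewrite Eu.
have noS : forall u w, u != v0 -> w != v0 -> e u w = false.
  move=> u w uv0 wv0; apply/negbTE/negP => euw.
  have uw : u != w by apply/eqP => uw; move: euw; rewrite uw eirr.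
  have Bn : [set: T] :\ u :\ v0 != [set: T].
    by apply/eqP => /setP /(_ u); rewrite !inE eqxx andbF.
  have [v [w' [vB w'B evw' Hv]]] := inv_fa (ZFA u uv0) Bn.
  move: vB; rewrite !inE andbT => /andP [vv0 vu].
  have evu : e v u.
    case: (eqVneq v w) => [->|vw]; first by rewrite esym.
    rewrite esym (twin v w u vv0 wv0 vw); [exact: euw| by rewrite eq_sym|exact: uw].
  have w'u : w' = u.
    case: (eqVneq w' u) => // w'u; exfalso.
    have H : u != w' by rewrite eq_sym.
    by move: (Hv u evu H); rewrite !inE eqxx andbF.
  subst w'.
  have evv0 : e v v0 = false.
    apply/negbTE/negP => H; have H2 : v0 != u by rewrite eq_sym.
    by move: (Hv v0 H H2); rewrite !inE eqxx.
  have [x ex] := noiso v0.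
  suff : e v0 x = false by rewrite ex.
  case: (eqVneq x v0) => [->|xv0]; first exact: eirr.
  case: (eqVneq x v) => [->|xv]; first by rewrite esym.
  have h1 : v0 != x by rewrite eq_sym.
  have h2 : v0 != v by rewrite eq_sym.
  by rewrite (twin x v v0 xv0 vv0 xv h1 h2) esym.
have ev0 : forall u, u != v0 -> e u v0.
  move=> u uv0; have [t et] := noiso u.
  case: (eqVneq t v0) => [<-//|tv0]; by rewrite noS in et.
have eE : forall x z, e x z = (x == v0) (+) (z == v0).
  move=> x z; case: (eqVneq x v0) => [->|xv0]; case: (eqVneq z v0) => [->|zv0] /=.
  - exact: eirr.
  - by rewrite esym ev0.
  - by rewrite ev0.
  - by rewrite noS.
pose g v := (y v).1.
have gv0 : g v0 = None by rewrite /g yv0.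
have gN : forall u, (g u == None) = (u == v0).
  move=> u; case: (eqVneq u v0) => [->|uv0]; first by rewrite gv0.
  by have [i yi] := yS u uv0; rewrite /g yi.
pose h (o : option 'I_r) := if o is Some i
  then odflt v0 [pick u | f (Some i, b) == [set: T] :\ u] else v0.
have hP : forall i, f (Some i, b) = [set: T] :\ h (Some i).
  move=> i; rewrite /h; case: pickP => [u /eqP //|H].
  have : tar_adj [set: T] (f (Some i, b)) by rewrite -fc fadj /starK2_adj /= eqxx.
  move/tar_adjP => [x Hx]; have := H x.
  suff -> : f (Some i, b) = [set: T] :\ x by rewrite eqxx.
  apply/setP => z; rewrite Hx !inE; by case: (z == x).
exists g; split; last first.
  move=> a z; rewrite eE.
  have sA : forall o1 o2 : option 'I_r, star_adj o1 o2 = (o1 == None) (+) (o2 == None).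
    by case=> [?|] [?|].
  by rewrite sA !gN.
exists h.
  move=> u; case: (eqVneq u v0) => [->|uv0]; first by rewrite gv0.
  have [i yi] := yS u uv0; rewrite /g yi /=.
  by apply: eqD1; rewrite -hP -yi yP.
case=> [i|] /=; last by rewrite gv0.
have hv : h (Some i) != v0.
  apply/eqP => E; have : f (Some i, b) = f (None, ~~ b) by rewrite fv0 hP E.
  by move/finj.
have [j yj] := yS _ hv; rewrite /g yj /=.
have : y (h (Some i)) = (Some i, b) by apply: finj; rewrite yP -hP.
by rewrite yj => -[->].
Qed.
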